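(* Let $(X,d,\phi)$ be a flow. Then \begin{align*} \overline{\mathrm{mdim}}_M(\phi,X,d)&=\limsup_{\epsilon\to0}\frac{1}{\log\frac1\epsilon}\sup_{x\in X}h_d(x,\epsilon,\phi),\\ \underline{\mathrm{mdim}}_M(\phi,X,d)&=\liminf_{\epsilon\to0}\frac{1}{\log\frac1\epsilon}\sup_{x\in X}h_d(x,\epsilon,\phi). \end{align*}
   Context: A flow $(X,d,\phi)$: $(X,d)$ compact metric, $\phi:X\times\mathbb{R}\to X$ continuous, $\phi_t(x)=\phi(x,t)$, $\phi_0=\mathrm{id}$, $\phi_{t+s}=\phi_t\circ\phi_s$. Let $d_t(x,y)=\max_{s\in[0,t]}d(\phi_sx,\phi_sy)$. For $Z\subset X$, $r_t(\phi,Z,d,\epsilon)$ is the minimal cardinality of a set $E\subset X$ such that every $x\in Z$ has some $y\in E$ with $d_t(x,y)<\epsilon$, and $r(\phi,Z,d,\epsilon)=\limsup_{t\to\infty}\frac1t\log r_t(\phi,Z,d,\epsilon)$. $\overline{\mathrm{mdim}}_M(\phi,X,d)=\limsup_{\epsilon\to0}\frac{r(\phi,X,d,\epsilon)}{\log(1/\epsilon)}$, $\underline{\mathrm{mdim}}_M(\phi,X,d)=\liminf_{\epsilon\to0}\frac{r(\phi,X,d,\epsilon)}{\log(1/\epsilon)}$. The local entropy function is $h_d(x,\epsilon,\phi)=\inf\{r(\phi,K,d,\epsilon):K \text{ a closed neighborhood of } x\}$. *)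

(* Defs.v *)
From HB Require Import structures.
From mathcomp Require Import all_boot all_order all_algebra.
From mathcomp Require Import all_classical all_reals all_analysis.
Set Implicit Arguments. Unset Strict Implicit. Unset Printing Implicit Defensive.
Import Order.TTheory GRing.Theory Num.Theory.
Import numFieldTopology.Exports numFieldNormedType.Exports.
Local Open Scope classical_set_scope.
Local Open Scope ring_scope.

Section FlowDefs.
Context {R : realType} {X : Type}.

Definition is_metric (d : X -> X -> R) : Prop :=
  [/\ (forall x y, 0 <= d x y),
      (forall x y, d x y = 0 <-> x = y),
      (forall x y, d x y = d y x) &
      (forall x y z, d x z <= d x y + d y z)].

Definition dball (d : X -> X -> R) (x : X) (r : R) : set X :=
  [set y | d x y < r].

Definition dopen (d : X -> X -> R) (U : set X) : Prop :=
  forall x, U x -> exists2 r : R, 0 < r & dball d x r `<=` U.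

Definition dclosed (d : X -> X -> R) (K : set X) : Prop := dopen d (~` K).

Definition dcompact (d : X -> X -> R) : Prop :=
  forall (I : Type) (U : I -> set X),
    (forall i, dopen d (U i)) -> (forall x, exists i, U i x) ->
    exists (n : nat) (f : 'I_n -> I), forall x, exists j, U (f j) x.

Definition is_flow (d : X -> X -> R) (phi : X -> R -> X) : Prop :=
  [/\ (forall x t (e : R), 0 < e -> exists2 del : R, 0 < del &
          forall y s, d x y < del -> `|t - s| < del -> d (phi x t) (phi y s) < e),
      (forall x, phi x 0 = x) &
      (forall x t s, phi x (t + s) = phi (phi x s) t)].

Definition dT (d : X -> X -> R) (phi : X -> R -> X) (t : R) (x y : X) : R :=
  sup [set d (phi x s) (phi y s) | s in `[0, t]].

(* r_t(phi,Z,d,eps): minimal cardinality of an (t,eps)-spanning set E of Z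
   (+oo if no finite one exists) *)
Definition rT (phi : X -> R -> X) (Z : set X) (d : X -> X -> R) (eps t : R) : \bar R :=
  ereal_inf [set (n%:R)%:E | n in
    [set n : nat | exists E : 'I_n -> X,
       forall x, Z x -> exists i, dT d phi t x (E i) < eps]].

Definition elog (a : \bar R) : \bar R :=
  match a with
  | EFin r => if 0 < r then (ln r)%:E else -oo%E
  | EPInf => +oo%E
  | ENInf => -oo%E
  end.

Definition rate (phi : X -> R -> X) (Z : set X) (d : X -> X -> R) (eps : R) : \bar R :=
  limf_esup (fun t : R => ((t^-1)%:E * elog (rT phi Z d eps t))%E) +oo.

Definition mdimM_upper (phi : X -> R -> X) (d : X -> X -> R) : \bar R :=
  limf_esup (fun eps : R => (rate phi setT d eps * ((ln (eps^-1))^-1)%:E)%E) 0^'+.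

Definition mdimM_lower (phi : X -> R -> X) (d : X -> X -> R) : \bar R :=
  limf_einf (fun eps : R => (rate phi setT d eps * ((ln (eps^-1))^-1)%:E)%E) 0^'+.

Definition closed_nbhd (d : X -> X -> R) (x : X) (K : set X) : Prop :=
  dclosed d K /\ exists2 r : R, 0 < r & dball d x r `<=` K.

Definition hloc (d : X -> X -> R) (x : X) (eps : R) (phi : X -> R -> X) : \bar R :=
  ereal_inf [set rate phi K d eps | K in closed_nbhd d x].

End FlowDefs.

(* Main.v *)
Require Import Defs.
From HB Require Import structures.
From mathcomp Require Import all_boot all_order all_algebra.
From mathcomp Require Import all_classical all_reals all_analysis.
From mathcomp Require Import lra.
Import Order.TTheory GRing.Theory Num.Theory.
Import numFieldTopology.Exports numFieldNormedType.Exports.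
Local Open Scope classical_set_scope.
Local Open Scope ring_scope.

Section Aux.
Context {R : realType} {X : Type} (d : X -> X -> R) (phi : X -> R -> X).

Lemma elog_le (a b : \bar R) : (a <= b)%E -> (elog a <= elog b)%E.
Proof.
case: a => [r| |]; case: b => [s| |] //=.
- rewrite lee_fin => rs; case: ifPn => r0; last by rewrite leNye.
  have s0 : 0 < s by apply: lt_le_trans rs.
  by rewrite s0 lee_fin ler_ln.
all: try (move=> _; rewrite ?leey ?leNye //).
Qed.

Lemma rT_le_fin (T : finType) (E : T -> X) Z eps t :
  (forall x, Z x -> exists i, dT d phi t x (E i) < eps) ->
  (rT phi Z d eps t <= (#|T|%:R)%:E)%E.
Proof.
move=> H; apply: ereal_inf_lbound; exists #|T| => //.
exists (E \o enum_val) => x /H [i Hi]; exists (enum_rank i).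
by rewrite /= enum_rankK.
Qed.

Lemma rT_small Z eps t c : (rT phi Z d eps t < c%:E)%E ->
  exists N : nat, N%:R < c /\ exists E : 'I_N -> X,
    forall x, Z x -> exists i, dT d phi t x (E i) < eps.
Proof.
by move=> /ereal_inf_lt [_ [N HN <-]]; rewrite lte_fin => Nc; exists N.
Qed.

Lemma sumn_bound (I : eqType) (f : I -> nat) (a : R) (s : seq I) :
  (forall i, (f i)%:R <= a) -> (sumn (map f s))%:R <= (size s)%:R * a.
Proof.
move=> H; elim: s => [|i s IH] /=; first by rewrite mul0r.
by rewrite natrD -addn1 natrD mulrDl mul1r addrC lerD.
Qed.


Lemma g_cover n (K : 'I_n -> set X) eps t c : 0 < t ->
  (forall y, exists j, K j y) ->
  (forall j, ((t^-1)%:E * elog (rT phi (K j) d eps t) < c%:E)%E) ->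
  ((t^-1)%:E * elog (rT phi setT d eps t) <= (t^-1 * ln n%:R + c)%:E)%E.
Proof.
move=> t0 cov Hj.
have H1 : forall j, exists p : {N : nat & 'I_N -> X},
    (projT1 p)%:R < expR (c * t) /\
    forall x, K j x -> exists i, dT d phi t x (projT2 p i) < eps.
  move=> j.
  have : (rT phi (K j) d eps t < (expR (c * t))%:E)%E.
    move: (Hj j); case: (rT phi (K j) d eps t) => [r| |] /=.
    - case: ifPn => r0; last by move=> _; rewrite lte_fin (le_lt_trans _ (expR_gt0 _)) // leNgt.
      rewrite -EFinM lte_fin => h.
      rewrite lte_fin -(lnK r0) ltr_expR.
      by move: h; rewrite mulrC ltr_pdivrMr.
    - by rewrite mulry gtr0_sg ?invr_gt0 // mul1e.
    - by move=> _; rewrite ltNye.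
  move=> /rT_small [N [HN [E HE]]].
  by exists (existT _ N E).
have [f Hf] := choice H1.
pose T := {j : 'I_n & 'I_(projT1 (f j))}.
have cT : (rT phi setT d eps t <= (#|{: T}|%:R)%:E)%E.
  apply: (@rT_le_fin T (fun p : T => projT2 (f (tag p)) (tagged p))).
  move=> x _; have [j Kj] := cov x; have [i Hi] := (Hf j).2 x Kj.
  by exists (Tagged (fun j => 'I_(projT1 (f j))) i).
have cT2 : #|{: T}|%:R <= n%:R * expR (c * t).
  rewrite card_tagged; apply: le_trans (@sumn_bound _ _ (expR (c * t)) _ _) _.
    by move=> j; rewrite card_ord; apply/ltW; exact: (Hf j).1.
  by rewrite size_enum_ord.
have cT3 : (rT phi setT d eps t <= (n%:R * expR (c * t))%:E)%E.
  by apply: (le_trans cT); rewrite lee_fin.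
have le1 := @elog_le _ _ cT3.
apply: (le_trans (lee_wpmul2l _ le1)); first by rewrite lee_fin invr_ge0 ltW.
clear -t0; case: n => [|n].
  by rewrite /= mul0r ltxx mulrNy gtr0_sg ?invr_gt0 // mul1e leNye.
rewrite /= mulr_gt0 ?expR_gt0 ?ltr0Sn // -EFinM lee_fin.
rewrite lnM ?posrE ?expR_gt0 ?ltr0Sn // expRK mulrDr.
by rewrite mulrCA mulVf ?mulr1 // gt_eqF.
Qed.


Lemma cover_rate n (K : 'I_n -> set X) eps c :
  (forall y, exists j, K j y) ->
  (forall j, (rate phi (K j) d eps < c%:E)%E) ->
  (rate phi setT d eps <= c%:E)%E.
Proof.
move=> cov Hj.
have ev : forall j, \forall t \near +oo,
    ((t^-1)%:E * elog (rT phi (K j) d eps t) < c%:E)%E.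
  move=> j; have /ereal_inf_lt [_ [V FV <-] Vc] := Hj j.
  apply: filterS FV => t Vt; apply: le_lt_trans Vc.
  by apply: ereal_sup_ubound; exists t.
have ev2 : \forall t \near +oo, forall j,
    ((t^-1)%:E * elog (rT phi (K j) d eps t) < c%:E)%E.
  by apply: filter_forall.
apply/lee_addgt0Pr => e e0.
have F0 := @nbhs_pinfty_gt R 0 (num_real _).
have F1 := @nbhs_pinfty_gt R (ln n%:R / e) (num_real _).
have FV : \forall t \near +oo, [/\ 0 < t, ln n%:R / e < t & forall j,
    ((t^-1)%:E * elog (rT phi (K j) d eps t) < c%:E)%E].
  near=> t; split; near: t; [exact: F0|exact: F1|exact: ev2].
apply: ge_ereal_inf; eexists; first by eexists; first exact: FV.
apply: ge_ereal_sup => _ [t [t0 t1 Ht] <-].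
apply: le_trans (@g_cover n K eps t c t0 cov Ht) _.
rewrite -EFinD lee_fin addrC lerD2l ltW //.
by move: t1; rewrite ltr_pdivrMr // => h; rewrite mulrC ltr_pdivrMr // mulrC.
Unshelve. all: by end_near.
Qed.


Lemma dball_open (Hm : is_metric d) x r : dopen d (dball d x r).
Proof.
case: Hm => _ _ _ tri y xy; exists (r - d x y); first by rewrite subr_gt0.
move=> z yz; rewrite /dball /=; apply: le_lt_trans (tri x y z) _.
move: yz; rewrite /dball /= => yz; lra.
Qed.

Lemma rate_eq (Hm : is_metric d) (Hc : dcompact d) eps :
  rate phi setT d eps = ereal_sup [set hloc d x eps phi | x in [set: X]].
Proof.
apply/eqP; rewrite eq_le; apply/andP; split; last first.
  apply: ge_ereal_sup => _ [x _ <-]; apply: ereal_inf_lbound.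
  exists setT => //; split; first by move=> y /(_ I).
  by exists 1.
set S := ereal_sup _.
have key : forall c : R, (S < c%:E)%E -> (rate phi setT d eps <= c%:E)%E.
  move=> c Sc.
  have H : forall x, exists p : set X * R,
      [/\ 0 < p.2, dball d x p.2 `<=` p.1 & (rate phi p.1 d eps < c%:E)%E].
    move=> x; have : (hloc d x eps phi < c%:E)%E.
      by apply: le_lt_trans Sc; apply: ereal_sup_ubound; exists x.
    by move=> /ereal_inf_lt [_ [K [_ [r r0 rK]] <-] Kc]; exists (K, r).
  have [f Hf] := choice H.
  have [n [g Hg]] : exists n (g : 'I_n -> X), forall x, exists j,
      dball d (g j) (f (g j)).2 x.
    apply: (Hc X (fun x => dball d x (f x).2)); first by move=> x; apply: dball_open.
    move=> x; exists x; rewrite /dball.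
    have [_ dxx _ _] := Hm; have [f0 _ _] := Hf x.
    by rewrite /= ((dxx x x).2 erefl).
  apply: (@cover_rate n (fun j => (f (g j)).1)).
    move=> y; have [j Hj] := Hg y; exists j.
    by have [_ sub _] := Hf (g j); exact: sub.
  by move=> j; have [_ _ ?] := Hf (g j).
move: key; case: S => [s| |] key.
- apply/lee_addgt0Pr => e e0; rewrite -EFinD; apply: key.
  by rewrite lte_fin ltrDl.
- by rewrite leey.
- case E: (rate phi setT d eps) => [r| |] //.
  + have := key (r - 1)%R (ltNyr _); rewrite E lee_fin => h; exfalso; clear -h; lra.
  + by have := key 0 (ltNyr _); rewrite E.
Qed.

End Aux.

Theorem theorem1p4 (R : realType) (X : Type) (d : X -> X -> R) (phi : X -> R -> X) :
  is_metric d -> dcompact d -> is_flow d phi ->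
  mdimM_upper phi d =
    limf_esup (fun eps : R =>
      (((ln (eps^-1))^-1)%:E * ereal_sup [set hloc d x eps phi | x in [set: X]])%E) 0^'+ /\
  mdimM_lower phi d =
    limf_einf (fun eps : R =>
      (((ln (eps^-1))^-1)%:E * ereal_sup [set hloc d x eps phi | x in [set: X]])%E) 0^'+.
Proof.
move=> Hm Hc _.
have E : (fun eps : R => (rate phi setT d eps * ((ln (eps^-1))^-1)%:E)%E) =
  (fun eps : R =>
      (((ln (eps^-1))^-1)%:E * ereal_sup [set hloc d x eps phi | x in [set: X]])%E).
  by apply/funext => eps; rewrite muleC rate_eq.
by rewrite /mdimM_upper /mdimM_lower E.
Qed.
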